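(* Let $L \in K[D]$ with $\operatorname{ord}(L)=d$ and $\operatorname{Sym}_L = S_1 S_2$, where $S_1,S_2$ are homogeneous of degrees $d_1,d_2$, and let $S_0=\gcd(S_1,S_2)$ be homogeneous of degree $d_0$. Then for every partial factorization $F_1\circ F_2$ of $L$ of order $d-d_0$ and of type $(S_1)(S_2)$, there is at most one factorization $L=F_1'\circ F_2'$ of type $(S_1)(S_2)$ which is an extension of $F_1\circ F_2$, i.e. satisfies $\operatorname{ord}(F_i-F_i')<(d-d_0)-(d-d_i)$ for $i=1,2$.
   Context: $K$ is a field with commuting derivations $\partial_1,\dots,\partial_n$, and $K[D]=K[D_1,\dots,D_n]$ is the ring of linear differential operators over $K$: the $D_i$ commute with each other and $D_i\circ a = aD_i+\partial_i(a)$ for $a\in K$. Every $L\in K[D]$ is uniquely $L=\sum_{|J|\le d} a_J D^J$ with $a_J\in K$, $D^J=D_1^{j_1}\cdots D_n^{j_n}$, $|J|=j_1+\dots+j_n$. The order $\operatorname{ord}(L)$ is the largest $|J|$ with $a_J\neq 0$, and $\operatorname{ord}(0)=-\infty$. The symbol $\operatorname{Sym}_L\in K[X_1,\dots,X_n]$ is the homogeneous polynomial $\sum_{|J|=\operatorname{ord}L} a_J X^J$. If $\operatorname{Sym}_L=S_1\cdots S_k$ with homogeneous $S_i$, a factorization of type $(S_1)\cdots(S_k)$ is an equality $L=F_1\circ\cdots\circ F_k$ with $\operatorname{Sym}_{F_i}=S_i$. For $t\in\{0,\dots,\operatorname{ord}L\}$, a partial factorization of $L$ of order $t$ is a composition $F_1\circ\cdots\circ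 F_k$ with $\operatorname{ord}(L-F_1\circ\cdots\circ F_k)<t$; it is of type $(S_1)\cdots(S_k)$ if $\operatorname{Sym}_{F_i}=S_i$ for all $i$. If $d_i=\deg S_i$, $d=\operatorname{ord}L$, and $F_1\circ\cdots\circ F_k$, $F_1'\circ\cdots\circ F_k'$ are partial factorizations of orders $t$ and $t'<t$, then the latter is an extension of the former if $\operatorname{ord}(F_i-F_i')<t-(d-d_i)$ for all $i$. A (complete) factorization is a partial factorization of order $0$. *)

(* Defs.v *)
From HB Require Import structures.
From mathcomp Require Import all_boot all_order all_algebra.
From mathcomp Require Import mpoly.
Set Implicit Arguments.
Unset Strict Implicit.
Unset Printing Implicit Defensive.
Import Order.TTheory GRing.Theory.
Local Open Scope ring_scope.

(* An operator L = sum_J a_J D^J is encoded by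
   its coefficient family, i.e. by the mpoly sum_J a_J X^J (this is the
   K-module structure of K[D]); the (non-commutative) composition is given by
   [dcomp] below (Leibniz rule), NOT by the product of {mpoly K[n]}. *)

Definition is_comm_derivations (K : fieldType) (n : nat) (der : 'I_n -> K -> K) :=
  [/\ forall i a b, der i (a + b) = der i a + der i b,
      forall i a b, der i (a * b) = der i a * b + a * der i b
    & forall i j a, der i (der j a) = der j (der i a)].

Section DiffOp.
Variables (K : fieldType) (n : nat) (der : 'I_n -> K -> K).

Definition derI (I : 'X_{1..n}) (a : K) : K :=
  foldr (fun i x => iter (I i) (der i) x) a (enum 'I_n).

Definition mbin (J I : 'X_{1..n}) : nat := (\prod_(i < n) 'C(J i, I i))%N.

(* composition P o Q:  (a_J D^J) o (b_M D^M)
      = sum_{I <= J} a_J C(J,I) d^I(b_M) D^{J - I + M} *)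
Definition dcomp (P Q : {mpoly K[n]}) : {mpoly K[n]} :=
  \sum_(J <- msupp P) \sum_(M <- msupp Q)
    \sum_(I : 'X_{1..n < (mdeg J).+1} | (val I <= J)%MM)
      (P@_J * (mbin J (val I))%:R * derI (val I) (Q@_M)) *: 'X_[(J - val I) + M].

End DiffOp.

Section OrdSym.
Variables (K : fieldType) (n : nat).

(* ord(P) as a natural number (meaningful for P != 0) *)
Definition dord (P : {mpoly K[n]}) : nat := (msize P).-1.

(* ord(P) < t, with the convention ord(0) = -oo *)
Definition ord_lt (P : {mpoly K[n]}) (t : int) : bool :=
  (P == 0) || ((dord P)%:Z < t).

Definition Sym (P : {mpoly K[n]}) : {mpoly K[n]} :=
  \sum_(m <- msupp P | mdeg m == dord P) P@_m *: 'X_[m].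

Definition mdvd (A B : {mpoly K[n]}) : Prop := exists C, B = C * A.
Definition is_gcd (G A B : {mpoly K[n]}) : Prop :=
  [/\ mdvd G A, mdvd G B & forall H, mdvd H A -> mdvd H B -> mdvd H G].

End OrdSym.

(* Main.v *)
Require Import Defs.
From HB Require Import structures.
From mathcomp Require Import all_boot all_order all_algebra.
From mathcomp Require Import mpoly ssrcomplements.
From Stdlib Require Import Classical ClassicalEpsilon.
From mathcomp Require Import ring zify.
Set Implicit Arguments. Unset Strict Implicit. Unset Printing Implicit Defensive.
Import Order.TTheory GRing.Theory.
Local Open Scope ring_scope.

Lemma min_ex (T : Type) (P : T -> Prop) (m : T -> nat) :
  (exists x, P x) -> exists x, P x /\ forall y, P y -> (m x <= m y)%N.
Proof.
move=> [x Px].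
suff H : forall k, forall x, P x -> (m x <= k)%N ->
  exists x, P x /\ forall y, P y -> (m x <= m y)%N by exact: (H _ x Px (leqnn _)).
elim=> [|k IH] z Pz hz.
  exists z; split=> // y _; by move: hz; rewrite leqn0 => /eqP ->.
case: (classic (exists y, P y /\ (m y <= k)%N)) => [[y [Py hy]]|N].
  exact: (IH y Py hy).
exists z; split=> // y Py; rewrite leqNgt; apply/negP => hlt.
apply: N; exists y; split=> //; by move: (leq_trans hlt hz); rewrite ltnS.
Qed.

Section Div.
Variable R : idomainType.
Implicit Types a b c u v : R.

Definition dv a b := exists c, b = c * a.
Definition unt a := dv a 1.
Definition irred a := [/\ a != 0, ~ unt a & forall b c, a = b * c -> unt b \/ unt c].
Definition prm a := [/\ a != 0, ~ unt a & forall b c, dv a (b * c) -> dv a b \/ dv a c].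
Definition ufd := forall a, a != 0 -> exists u (s : seq R),
  [/\ unt u, forall x, x \in s -> prm x & a = u * \prod_(x <- s) x].

Lemma dv_refl a : dv a a. Proof. by exists 1; rewrite mul1r. Qed.
Lemma dv_trans a b c : dv a b -> dv b c -> dv a c.
Proof. by move=> [x ->] [y ->]; exists (y * x); rewrite mulrA. Qed.
Lemma dv_mull a b c : dv a b -> dv a (c * b).
Proof. by move=> [x ->]; exists (c * x); rewrite mulrA. Qed.
Lemma dv_mulr a b c : dv a b -> dv a (b * c).
Proof. by move=> h; rewrite mulrC; apply: dv_mull. Qed.
Lemma dv_mul a b : dv a (a * b).
Proof. by exists b; rewrite mulrC. Qed.
Lemma dv_mul2 a b : dv a (b * a).
Proof. by exists b. Qed.
Lemma dv0 a : dv a 0. Proof. by exists 0; rewrite mul0r. Qed.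
Lemma dvD a b c : dv a b -> dv a c -> dv a (b + c).
Proof. by move=> [x ->] [y ->]; exists (x + y); rewrite mulrDl. Qed.
Lemma dvN a b : dv a b -> dv a (- b).
Proof. by move=> [x ->]; exists (- x); rewrite mulNr. Qed.
Lemma dvB a b c : dv a b -> dv a c -> dv a (b - c).
Proof. by move=> h1 h2; apply: dvD => //; apply: dvN. Qed.
Lemma dv_sum a (I : Type) (r : seq I) (P : pred I) (F : I -> R) :
  (forall i, P i -> dv a (F i)) -> dv a (\sum_(i <- r | P i) F i).
Proof.
move=> h; apply: (big_ind (dv a)) => //; [exact: dv0 | exact: dvD].
Qed.
Lemma dv_neq0 a b : dv a b -> b != 0 -> a != 0.
Proof. by move=> [x ->]; apply: contraNneq => ->; rewrite mulr0. Qed.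
Lemma unt_neq0 u : unt u -> u != 0.
Proof. by move=> h; apply: dv_neq0 h _; rewrite oner_neq0. Qed.
Lemma unt1 : unt 1. Proof. exact: dv_refl. Qed.
Lemma unt_dv u a : unt u -> dv u a.
Proof. by move=> [w hw]; exists (a * w); rewrite -mulrA -hw mulr1. Qed.
Lemma untM u v : unt u -> unt v -> unt (u * v).
Proof. by move=> [x hx] [y hy]; exists (x * y); rewrite mulrACA -hx -hy mulr1. Qed.
Lemma untMl u v : unt (u * v) -> unt u.
Proof. by move=> [x hx]; exists (x * v); rewrite hx [u * v]mulrC mulrA. Qed.
Lemma untMr u v : unt (u * v) -> unt v.
Proof. by rewrite mulrC; apply: untMl. Qed.
Lemma dv_unt a u : dv a u -> unt u -> unt a.
Proof. move=> h1 h2; exact: dv_trans h1 h2. Qed.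
Lemma dv_cancel a b c : a != 0 -> dv (a * b) (a * c) -> dv b c.
Proof.
move=> na [x hx]; exists x; apply: (mulfI na).
by rewrite hx mulrCA.
Qed.
Lemma dv_cancelr a b c : a != 0 -> dv (b * a) (c * a) -> dv b c.
Proof. by rewrite ![_ * a]mulrC; apply: dv_cancel. Qed.

Lemma dv_untl w q b : unt w -> dv q b -> dv (w * q) b.
Proof.
move=> [z hz] [y ->]; exists (y * z).
by rewrite -mulrA [z * _]mulrA -hz mul1r.
Qed.

Lemma prm_unt q w : prm q -> unt w -> prm (w * q).
Proof.
move=> [q0 qu qp] wu; split.
- by rewrite mulf_neq0 // unt_neq0.
- by move/untMr.
move=> b c h.
have : dv q (b * c) by apply: dv_trans h; apply: dv_mul2.
by case/qp => h1; [left|right]; apply: dv_untl.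
Qed.

Lemma ufd_gauss : ufd -> forall A B X, A != 0 ->
  (forall H, dv H A -> dv H B -> unt H) -> dv A (X * B) -> dv A X.
Proof.
move=> hU A B X nA; have [u [s [hu hs ->]]] := hU A nA.
elim: s u hu hs X => [|q s IH] u hu hs X.
  by rewrite big_nil mulr1 => _ _; apply: unt_dv.
rewrite big_cons => hcop hdv.
have qp : prm q by apply: hs; rewrite mem_head.
have [q0 qu qP] := qp.
have hq : dv q (X * B) by apply: dv_trans hdv; rewrite mulrCA; apply: dv_mul.
case: (qP _ _ hq) => [[X' hX]|hqB]; last first.
  exfalso; apply: qu; apply: hcop => //; rewrite mulrCA; apply: dv_mul.
subst X.
have h1 : dv (u * \prod_(j <- s) j) X'.
  apply: IH => //.
  - by move=> x xs; apply: hs; rewrite inE xs orbT.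
  - by move=> H h1 h2; apply: hcop => //; apply: dv_trans h1 _; rewrite mulrCA; apply: dv_mull; apply: dv_refl.
  - apply: (dv_cancel q0).
    have e1 : u * (q * \prod_(j <- s) j) = q * (u * \prod_(j <- s) j) by rewrite mulrCA.
    have e2 : X' * q * B = q * (X' * B) by rewrite mulrAC mulrC.
    by rewrite -e1 -e2.
case: h1 => y ->; exists y; ring.
Qed.

Lemma fact_exists (N : R -> nat) :
  (forall a b, a != 0 -> b != 0 -> N (a * b) = (N a + N b)%N) ->
  (forall a, a != 0 -> N a = 0%N -> unt a) ->
  forall a, a != 0 -> exists u (s : seq R),
    [/\ unt u, forall x, x \in s -> irred x & a = u * \prod_(x <- s) x].
Proof.
move=> NM N0.
suff H : forall k a, (N a <= k)%N -> a != 0 -> exists u (s : seq R),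
    [/\ unt u, forall x, x \in s -> irred x & a = u * \prod_(x <- s) x].
  by move=> a; apply: (H (N a)).
elim=> [|k IH] a ha a0.
  exists a, [::]; split; first by apply: N0 => //; apply/eqP; rewrite -leqn0.
    by []. by rewrite big_nil mulr1.
case: (classic (unt a)) => ua.
  by exists a, [::]; split => //; rewrite big_nil mulr1.
case: (classic (irred a)) => ia.
  exists 1, [:: a]; split; [exact: unt1| |by rewrite big_seq1 mul1r].
  by move=> x; rewrite inE => /eqP ->.
have [b [c [abc nb nc]]] : exists b c, [/\ a = b * c, ~ unt b & ~ unt c].
  apply: NNPP => hn; apply: ia; split => // b c habc.
  apply: NNPP => hn2; apply: hn; exists b, c; split => // ; by move=> ?; apply: hn2; tauto.
have b0 : b != 0 by apply/eqP => hb; move: a0; rewrite abc hb mul0r eqxx.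
have c0 : c != 0 by apply/eqP => hc; move: a0; rewrite abc hc mulr0 eqxx.
have Nb : (0 < N b)%N by rewrite lt0n; apply/eqP => /(N0 _ b0).
have Nc : (0 < N c)%N by rewrite lt0n; apply/eqP => /(N0 _ c0).
move: ha; rewrite abc NM // => hk.
have [ub [sb [hub hsb eb]]] : exists u (s : seq R),
    [/\ unt u, forall x, x \in s -> irred x & b = u * \prod_(x <- s) x].
  apply: IH b0; rewrite -ltnS; apply: leq_trans hk; by rewrite -addn1 leq_add2l.
have [uc [sc [huc hsc ec]]] : exists u (s : seq R),
    [/\ unt u, forall x, x \in s -> irred x & c = u * \prod_(x <- s) x].
  apply: IH c0; rewrite -ltnS; apply: leq_trans hk; by rewrite -add1n leq_add2r.
exists (ub * uc), (sb ++ sc); split; first exact: untM.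
  by move=> x; rewrite mem_cat => /orP [/hsb|/hsc].
by rewrite eb ec big_cat /= mulrACA.
Qed.

Lemma irred_prm_ufd (N : R -> nat) :
  (forall a b, a != 0 -> b != 0 -> N (a * b) = (N a + N b)%N) ->
  (forall a, a != 0 -> N a = 0%N -> unt a) ->
  (forall a, irred a -> prm a) -> ufd.
Proof.
move=> NM N0 ip a a0; have [u [s [hu hs e]]] := fact_exists NM N0 a0.
by exists u, s; split => // x /hs; apply: ip.
Qed.

Lemma ufd_irred_prm : ufd -> forall a, irred a -> prm a.
Proof.
move=> hU a [a0 au ai]; have [u [s [hu hs e]]] := hU a a0.
case: s hs e => [|q s] hs e.
  by exfalso; apply: au; move: e; rewrite big_nil mulr1 => ->.
move: e; rewrite big_cons mulrCA mulrC => e.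
have [] := ai _ _ e => h.
  by rewrite e; apply: prm_unt => //; apply: hs; rewrite mem_head.
have [_ qu _] := hs q (mem_head _ _); by exfalso; apply: qu.
Qed.

End Div.

Section PolyUFD.
Variable R : idomainType.
Implicit Types (a b c u v : R) (f g p q : {poly R}).

Lemma dvC_coef c f : (forall i, dv c f`_i) -> dv c%:P f.
Proof.
move=> h.
pose d i := proj1_sig (constructive_indefinite_description _ (h i)).
have hd i : f`_i = d i * c by rewrite /d; case: constructive_indefinite_description.
exists (\poly_(i < size f) d i); apply/polyP => i.
rewrite coefMC coef_poly; case: ifP => // /negbT; rewrite -leqNgt => hi.
by rewrite mul0r nth_default.
Qed.

Lemma coef_dvC c f i : dv c%:P f -> dv c f`_i.
Proof. by move=> [g ->]; rewrite coefMC; exists g`_i. Qed.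

Lemma untC c : unt c%:P -> unt c.
Proof. by move=> [g hg]; exists g`_0; move: (congr1 (fun x : {poly R} => x`_0) hg); rewrite coefMC coef1. Qed.

Lemma untCr c : unt c -> unt c%:P.
Proof. by move=> [g hg]; exists g%:P; rewrite -polyCM -hg. Qed.

Lemma unt_size f : unt f -> size f = 1%N.
Proof.
move=> [g hg]; have f0 : f != 0 by apply: unt_neq0; exists g.
have g0 : g != 0 by apply/eqP => e; move: hg; rewrite e mul0r => /eqP; rewrite oner_eq0.
have := congr1 (fun x : {poly R} => size x) hg; rewrite /= size_mul // size_poly1.
move: f0 g0; rewrite -!size_poly_gt0 -subn1; move: (size f) (size g) => a b; change (GRing.one _) with 1%N; lia.
Qed.

Lemma prmC c : prm c -> prm c%:P.
Proof.
move=> [c0 cu cp]; split; first by rewrite polyC_eq0.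
  by move/untC.
move=> f g h; apply: NNPP => hn.
have hf : exists i, ~ dv c f`_i.
  apply: NNPP => hn2; apply: hn; left; apply: dvC_coef => i; apply: NNPP => hi; apply: hn2; by exists i.
have hg : exists i, ~ dv c g`_i.
  apply: NNPP => hn2; apply: hn; right; apply: dvC_coef => i; apply: NNPP => hi; apply: hn2; by exists i.
have [i [hi mi]] := min_ex id hf.
have [j [hj mj]] := min_ex id hg.
have := coef_dvC (i + j) h; rewrite coefM.
have ilt : (i < (i + j).+1)%N by rewrite ltnS leq_addr.
rewrite (bigD1 (Ordinal ilt)) //= addKn => hs.
have hrest : dv c (\sum_(k < (i + j).+1 | k != Ordinal ilt) f`_k * g`_(i + j - k)).
  apply: dv_sum => k hk.
  have [klt|kgt] := ltnP k i.
    apply: dv_mulr; apply: NNPP => nk; have := mi k nk; by rewrite leqNgt klt.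
  have kne : (k : nat) != i by apply: contra hk => /eqP e; apply/eqP/val_inj.
  have kgt' : (i < k)%N by rewrite ltn_neqAle eq_sym kne.
  apply: dv_mull; apply: NNPP => nk; have := mj _ nk.
  rewrite leqNgt => /negP; apply.
  have := ltn_ord k; rewrite ltnS => kle.
  by rewrite -(ltn_add2l k) subnKC // ltn_add2r.
have : dv c (f`_i * g`_j).
  have -> : f`_i * g`_j = (f`_i * g`_j + \sum_(k < (i + j).+1 | k != Ordinal ilt) f`_k * g`_(i + j - k)) - \sum_(k < (i + j).+1 | k != Ordinal ilt) f`_k * g`_(i + j - k) by rewrite addrK.
  exact: dvB.
by case/cp.
Qed.

Hypothesis hU : ufd R.

Lemma peel c f g : c != 0 -> dv c%:P (f * g) ->
  exists c1 c2, [/\ c = c1 * c2, dv c1%:P f & dv c2%:P g].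
Proof.
move=> c0; have [u [s [hu hs ->]]] := hU c0.
elim: s u hu hs f g => [|q s IH] u hu hs f g.
  move=> _; exists u, 1; split; first by rewrite big_nil mulr1.
    by apply: unt_dv; apply: untCr.
  by exists g; rewrite mulr1.
rewrite big_cons => h.
have qp : prm q by apply: hs; rewrite mem_head.
have q0 : q%:P != 0 by rewrite polyC_eq0; case: qp.
have hs' : forall x, x \in s -> prm x by move=> x xs; apply: hs; rewrite inE xs orbT.
have hq : dv q%:P (f * g) by apply: dv_trans h; rewrite !polyCM mulrCA; apply: dv_mul.
case: (prmC qp) => _ _ /(_ _ _ hq) [[f' ef]|[g' eg]].
  have : dv (u * \prod_(j <- s) j)%:P (f' * g).
    apply: (dv_cancel q0); move: h; rewrite ef !polyCM.
    have -> : u%:P * (q%:P * (\prod_(j <- s) j)%:P) = q%:P * (u%:P * (\prod_(j <- s) j)%:P) by ring.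
    by have -> : f' * q%:P * g = q%:P * (f' * g) by ring.
  case/(IH _ hu hs') => c1 [c2 [e h1 h2]].
  exists (c1 * q), c2; split=> //; first by rewrite mulrCA e; ring.
  by rewrite ef polyCM; case: h1 => y ->; exists y; ring.
have : dv (u * \prod_(j <- s) j)%:P (f * g').
  apply: (dv_cancel q0); move: h; rewrite eg !polyCM.
  have -> : u%:P * (q%:P * (\prod_(j <- s) j)%:P) = q%:P * (u%:P * (\prod_(j <- s) j)%:P) by ring.
  by have -> : f * (g' * q%:P) = q%:P * (f * g') by ring.
case/(IH _ hu hs') => c1 [c2 [e h1 h2]].
exists c1, (c2 * q); split=> //; first by rewrite mulrCA e; ring.
by rewrite eg polyCM; case: h2 => y ->; exists y; ring.
Qed.

Definition primitive p := forall c, dv c%:P p -> unt c.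

Lemma prim_dv p c f : primitive p -> c != 0 -> dv p (c%:P * f) -> dv p f.
Proof.
move=> pp c0 [M eM].
have : dv c%:P (M * p) by rewrite -eM; apply: dv_mulr; apply: dv_refl.
case/(peel c0) => c1 [c2 [e [M' eM'] h2]].
have [z hz] := pp _ h2.
have c10 : c1%:P != 0 by rewrite polyC_eq0; apply/eqP => e1; move: c0; rewrite e e1 mul0r eqxx.
have e2 : c2%:P * f = M' * p.
  apply: (mulfI c10); move: eM; rewrite e eM' polyCM => eM.
  have -> : c1%:P * (c2%:P * f) = c1%:P * c2%:P * f by ring.
  rewrite eM; ring.
exists (z%:P * M'); rewrite -mulrA -e2 mulrA -polyCM -hz mul1r //.
Qed.

Lemma irred_prm_poly p : irred p -> prm p.
Proof.
move=> ip; have [p0 pu pi] := ip.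
have sp : (0 < size p)%N by rewrite size_poly_gt0.
case: (leqP (size p) 1) => hs.
  have ep : p = (p`_0)%:P by apply: size1_polyC.
  rewrite ep; apply: prmC; apply: (ufd_irred_prm hU).
  have c0 : p`_0 != 0 by apply/eqP => e; move: p0; rewrite ep e polyC0 eqxx.
  split => //; first by move=> u; apply: pu; rewrite ep; apply: untCr.
  move=> b c e; have : p = b%:P * c%:P by rewrite ep e polyCM.
  by case/pi => /untC; [left|right].
have pp : primitive p.
  move=> c [W eW]; have := pi _ _ eW; case=> [/unt_size|/untC //].
  have c0 : c != 0 by apply/eqP => e; move: p0; rewrite eW e polyC0 mulr0 eqxx.
  have W0 : W != 0 by apply/eqP => e; move: p0; rewrite eW e mul0r eqxx.
  move: hs; rewrite eW size_mul ?polyC_eq0 // size_polyC c0 addn1 /= => hs e.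
  by move: hs; rewrite e.
split => // f g hfg; apply: NNPP => hn.
have nf : ~ dv p f by move=> h; apply: hn; left.
have ng : ~ dv p g by move=> h; apply: hn; right.
pose S (h : {poly R}) := h != 0 /\ exists u v : {poly R}, h = u * p + v * f.
have [h [[h0 [u [v ehv]]] hmin]] : exists h : {poly R}, S h /\ forall y, S y -> (size h <= size y)%N.
  apply: min_ex; exists p; split => //; exists 1, 0; ring.
have pd : forall x : {poly R}, (exists a b : {poly R}, x = a * p + b * f) ->
    exists k, lead_coef h ^+ k *: x = (Pdiv.Idomain.divp x h) * h.
  move=> x [a [b ex]]; exists (Pdiv.Idomain.scalp x h).
  have e := Pdiv.Idomain.divp_eq x h.
  suff m0 : Pdiv.Idomain.modp x h = 0 by rewrite e m0 addr0.
  apply: NNPP => /eqP m0.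
  have hS : S (Pdiv.Idomain.modp x h).
    split => //; exists (lead_coef h ^+ Pdiv.Idomain.scalp x h *: a - Pdiv.Idomain.divp x h * u),
       (lead_coef h ^+ Pdiv.Idomain.scalp x h *: b - Pdiv.Idomain.divp x h * v).
    have -> : Pdiv.Idomain.modp x h = lead_coef h ^+ Pdiv.Idomain.scalp x h *: x - Pdiv.Idomain.divp x h * h by rewrite e addrC addKr.
    rewrite ex ehv -!mul_polyC; ring.
  by have := hmin _ hS; rewrite leqNgt Pdiv.Idomain.ltn_modpN0.
have lc0 : forall k, lead_coef h ^+ k != 0 by move=> k; rewrite expf_neq0 // lead_coef_eq0.
have [k1 e1] : exists k, lead_coef h ^+ k *: p = Pdiv.Idomain.divp p h * h by apply: pd; exists 1, 0; ring.
have [k2 e2] : exists k, lead_coef h ^+ k *: f = Pdiv.Idomain.divp f h * h by apply: pd; exists 0, 1; ring.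
case: (leqP (size h) 1) => hsh.
  have eh : h = (h`_0)%:P by apply: size1_polyC.
  have r0 : h`_0 != 0 by apply/eqP => e; move: h0; rewrite eh e polyC0 eqxx.
  apply: ng; apply: (prim_dv pp r0).
  case: hfg => W eW; exists (u * g + v * W).
  rewrite -eh ehv; transitivity (u * g * p + v * (f * g)); first ring.
  by rewrite eW; ring.
have hph : dv p h.
  move: e1; rewrite -mul_polyC => e1.
  have : dv (lead_coef h ^+ k1)%:P (Pdiv.Idomain.divp p h * h) by rewrite -e1; apply: dv_mulr; apply: dv_refl.
  case/(peel (lc0 k1)) => c1 [c2 [ec [Q' eQ] [h' eh']]].
  have c0 : (c1 * c2)%:P != 0 by rewrite -ec polyC_eq0.
  have epq : p = Q' * h'.
    apply: (mulfI c0); move: e1; rewrite ec eQ eh' polyCM; move=> e1; rewrite e1; ring.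
  case: (pi _ _ epq) => [[z hz]|/unt_size sh'].
    exists (z * c2%:P); rewrite eh' epq; transitivity ((z * Q') * h' * c2%:P); first by rewrite -hz mul1r.
    ring.
  have c20 : c2 != 0 by apply/eqP => e; move: c0; rewrite e mulr0 polyC0 eqxx.
  have h'0 : h' != 0 by apply/eqP => e; move: hsh; rewrite eh' e mul0r size_poly0.
  by move: hsh; rewrite eh' size_mul ?polyC_eq0 // sh' size_polyC c20.
apply: nf; apply: (prim_dv pp (lc0 k2)).
by rewrite mul_polyC e2; apply: dv_mull.
Qed.

End PolyUFD.

Local Notation widen := (widen_ord (leqnSn _)).

Section MuniIso.
Variables (n : nat) (R : ringType).

Definition jn (m : 'X_{1..n}) (k : nat) : 'X_{1..n.+1} := [multinom of rcons m k].
Definition prj (m : 'X_{1..n.+1}) : 'X_{1..n} := [multinom m (widen i) | i < n].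

Lemma jn_widen m k (i : 'I_n) : jn m k (widen i) = m i.
Proof.
case: m=> m; rewrite !(mnm_nth 0%N) nth_rcons.
by rewrite size_tuple /=; case: i => i /= ->.
Qed.

Lemma jn_max m k : jn m k ord_max = k.
Proof.
rewrite multinomE (tnth_nth 0%N) nth_rcons /=.
by rewrite size_tuple ltnn eqxx.
Qed.

Lemma prj_jn m k : prj (jn m k) = m.
Proof. by apply/mnmP => i; rewrite mnmE jn_widen. Qed.

Lemma ord_cases (i : 'I_n.+1) : (exists j : 'I_n, i = widen j) \/ i = ord_max.
Proof.
case: (ltnP i n) => h.
  by left; exists (Ordinal h); apply/val_inj.
right; apply/val_inj => /=; apply/eqP; rewrite eqn_leq h andbT -ltnS; exact: ltn_ord.
Qed.

Lemma jn_prj m : jn (prj m) (m ord_max) = m.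
Proof.
apply/mnmP => i; case: (ord_cases i) => [[j ->]|->].
  by rewrite jn_widen mnmE.
by rewrite jn_max.
Qed.

Lemma muniX m : muni ('X_[m] : {mpoly R[n.+1]}) = 'X_[prj m] *: 'X^(m ord_max).
Proof. by rewrite muniE msuppX big_seq1 mcoeffX eqxx scale1r. Qed.

Lemma coef_muni (p : {mpoly R[n.+1]}) m : ((muni p)`_(m ord_max))@_(prj m) = p@_m.
Proof.
rewrite muniE coef_sum raddf_sum /=.
rewrite [in RHS](mpolyE p) raddf_sum /=; apply: eq_bigr => m0 _.
rewrite coefZ coefXn mcoeffZ mcoeffX.
case: (eqVneq (m ord_max) (m0 ord_max)) => e.
  rewrite mulr1 mcoeffZ mcoeffX; congr (_ * _%:R).
congr (nat_of_bool _).   change ((prj m0 == prj m) = (m0 == m)).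
  case: (eqVneq m0 m) => [->|ne]; first exact: eqxx.
  apply/negbTE; apply: contra ne => /eqP h; apply/eqP.
  by rewrite -(jn_prj m0) -(jn_prj m) h e.
rewrite mulr0 mcoeff0; case: eqVneq => [h|]; last by rewrite mulr0.
by move: e; rewrite h eqxx.
Qed.

Lemma muni_inj : injective (@muni n R).
Proof.
move=> p q e; apply/mpolyP => m; by rewrite -coef_muni e coef_muni.
Qed.

Lemma muni_surj (q : {poly {mpoly R[n]}}) : exists p, muni p = q.
Proof.
exists (\sum_(i < size q) \sum_(m <- msupp q`_i) (q`_i)@_m *: 'X_[jn m i]).
rewrite raddf_sum /=; transitivity (\poly_(i < size q) q`_i); last exact: coefK.
rewrite poly_def; apply: eq_bigr => i _.
rewrite raddf_sum /= [in RHS](mpolyE q`_i) scaler_suml; apply: eq_bigr => m _.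
by rewrite muniZ muniX prj_jn jn_max scalerA mul_mpolyC.
Qed.

End MuniIso.

Section Transfer.
Variables (R S : idomainType) (phi : R -> S).
Hypotheses (phiM : {morph phi : x y / x * y}) (phi1 : phi 1 = 1) (phi0 : phi 0 = 0)
  (phi_inj : injective phi) (phi_surj : forall y, exists x, phi x = y).

Lemma dv_phi a b : dv (phi a) (phi b) <-> dv a b.
Proof.
split; last by move=> [c ->]; exists (phi c); rewrite phiM.
move=> [c e]; have [c' ec] := phi_surj c; exists c'; apply: phi_inj; by rewrite phiM ec.
Qed.

Lemma unt_phi a : unt (phi a) <-> unt a.
Proof. by rewrite /unt -phi1 dv_phi. Qed.

Lemma transfer_prm : (forall y : S, irred y -> prm y) -> forall x : R, irred x -> prm x.
Proof.
move=> H x [x0 xu xi].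
have : irred (phi x).
  split.
  - by apply/eqP => e; move: x0; rewrite -phi0 in e; rewrite (phi_inj e) eqxx.
  - by move/unt_phi.
  - move=> b c e; have [b' eb] := phi_surj b; have [c' ec] := phi_surj c.
    have : x = b' * c' by apply: phi_inj; rewrite phiM eb ec.
    by case/xi => /unt_phi; rewrite ?eb ?ec; [left|right].
case/H => _ _ hp; split => // b c.
rewrite -dv_phi phiM => /hp [] /dv_phi; by [left|right].
Qed.
End Transfer.

Section MpolyUFD.
Variable K : fieldType.

Lemma msize_unt n (p : {mpoly K[n]}) : p != 0 -> (msize p).-1 = 0%N -> unt p.
Proof.
move=> p0 h; have h1 : (msize p <= 1)%N by lia.
have e := msize1_polyC h1.
have c0 : p@_0 != 0 by apply/eqP => c; move: p0; rewrite e c mpolyC0 eqxx.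
set c := p@_0 in e c0 *; exists (c^-1)%:MP; by rewrite {1}e -mpolyCM mulVf.
Qed.

Lemma msize_mul n (a b : {mpoly K[n]}) : a != 0 -> b != 0 ->
  (msize (a * b)).-1 = ((msize a).-1 + (msize b).-1)%N.
Proof.
move=> a0 b0; rewrite msizeM //.
have H : forall x y : nat, x = x.-1.+1 -> y = y.-1.+1 -> ((x + y).-1).-1 = (x.-1 + y.-1)%N.
  by move=> [|x] [|y] //= _ _; rewrite addnS.
exact: H (mpolySpred _ a0) (mpolySpred _ b0).
Qed.

Lemma mpoly_ufd n : ufd {mpoly K[n]}.
Proof.
elim: n => [|n IH].
  move=> a a0; exists a, [::]; split; last by rewrite big_nil mulr1.
    apply: msize_unt => //; rewrite [a]nvar0_mpolyC msizeC; by case: (_ != 0).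
  by [].
apply: (@irred_prm_ufd _ (fun p => (msize p).-1)).
- by move=> a b; apply: msize_mul.
- by move=> a; apply: msize_unt.
apply: (@transfer_prm _ _ (@muni n K)).
- exact: muniM.
- exact: muni1.
- exact: muni0.
- exact: muni_inj.
- exact: muni_surj.
by move=> y; apply: irred_prm_poly.
Qed.

End MpolyUFD.

Section Ops.
Variables (K : fieldType) (n : nat) (der : 'I_n -> K -> K).
Hypothesis hder : is_comm_derivations der.

Notation hc := (@pihomog n K mdeg).

Lemma SymE (P : {mpoly K[n]}) : Sym P = hc (dord P) P.
Proof. by []. Qed.

Lemma derD i a b : der i (a + b) = der i a + der i b.
Proof. by case: hder. Qed.

Lemma der0 i : der i 0 = 0.
Proof. have h := derD i 0 0; rewrite addr0 in h; apply: (addrI (der i 0)); by rewrite addr0 -h. Qed.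

Lemma derN i a : der i (- a) = - der i a.
Proof. by apply/eqP; rewrite -addr_eq0 -derD addNr der0. Qed.

Lemma derID I a b : derI der I (a + b) = derI der I a + derI der I b.
Proof.
rewrite /derI; elim: (enum 'I_n) => //= i s ->.
by elim: (I i) => //= k ->; rewrite derD.
Qed.

Lemma derIN I a : derI der I (- a) = - derI der I a.
Proof.
rewrite /derI; elim: (enum 'I_n) => //= i s ->.
by elim: (I i) => //= k ->; rewrite derN.
Qed.

Lemma derIB I a b : derI der I (a - b) = derI der I a - derI der I b.
Proof. by rewrite derID derIN. Qed.

Lemma derI00 I : derI der I 0 = 0.
Proof. by have := derIB I 0 0; rewrite !subrr. Qed.

Lemma derI0 a : derI der 0%MM a = a.
Proof. by rewrite /derI; elim: (enum 'I_n) => //= i s ->; rewrite mnm0E. Qed.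

Lemma mbin0 (J : 'X_{1..n}) : mbin J 0%MM = 1%N.
Proof. by rewrite /mbin big1 // => i _; rewrite mnm0E bin0. Qed.

Lemma big_msupp_w (V : zmodType) (p : {mpoly K[n]}) k (F : 'X_{1..n} -> V) :
  (msize p <= k)%N -> (forall m, p@_m = 0 -> F m = 0) ->
  \sum_(m <- msupp p) F m = \sum_(m : 'X_{1..n < k}) F m.
Proof.
move=> lt_pk hF; pose I : subFinType _ := 'X_{1..n < k}.
rewrite (big_mksub I) //=; first last.
  by move=> x /msize_mdeg_lt /leq_trans; apply.
  by rewrite msupp_uniq.
by rewrite big_rmcond //= => i /memN_msupp_eq0 /hF.
Qed.

Definition dterm (P Q : {mpoly K[n]}) (J M : 'X_{1..n}) : {mpoly K[n]} :=
  \sum_(I : 'X_{1..n < (mdeg J).+1} | (val I <= J)%MM)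
      (P@_J * (mbin J (val I))%:R * derI der (val I) (Q@_M)) *: 'X_[(J - val I) + M].

Lemma dcompwE k (P Q : {mpoly K[n]}) : (msize P <= k)%N -> (msize Q <= k)%N ->
  dcomp der P Q = \sum_(J : 'X_{1..n < k}) \sum_(M : 'X_{1..n < k}) dterm P Q J M.
Proof.
move=> hP hQ; rewrite /dcomp (big_msupp_w hP); last first.
  move=> m e; rewrite big1 // => M _; rewrite big1 // => I _; by rewrite e !mul0r scale0r.
apply: eq_bigr => J _; rewrite (big_msupp_w hQ) //.
move=> m e; rewrite /dterm big1 // => I _; by rewrite e derI00 mulr0 scale0r.
Qed.

Lemma dcompBl P1 P2 Q : dcomp der (P1 - P2) Q = dcomp der P1 Q - dcomp der P2 Q.
Proof.
pose k := maxn (msize P1) (maxn (msize P2) (msize Q)).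
have h1 : (msize P1 <= k)%N by rewrite /k; lia.
have h2 : (msize P2 <= k)%N by rewrite /k; lia.
have h3 : (msize Q <= k)%N by rewrite /k; lia.
have h4 : (msize (P1 - P2) <= k)%N.
  apply: leq_trans (msizeD_le _ _) _; rewrite msizeN; lia.
rewrite !(dcompwE h1 h3) !(dcompwE h2 h3) !(dcompwE h4 h3) -sumrB.
apply: eq_bigr => J _; rewrite -sumrB; apply: eq_bigr => M _.
rewrite /dterm -sumrB; apply: eq_bigr => I _.
by rewrite mcoeffB !mulrBl scalerBl.
Qed.

Lemma dcompBr P Q1 Q2 : dcomp der P (Q1 - Q2) = dcomp der P Q1 - dcomp der P Q2.
Proof.
pose k := maxn (msize P) (maxn (msize Q1) (msize Q2)).
have h1 : (msize P <= k)%N by rewrite /k; lia.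
have h2 : (msize Q1 <= k)%N by rewrite /k; lia.
have h3 : (msize Q2 <= k)%N by rewrite /k; lia.
have h4 : (msize (Q1 - Q2) <= k)%N.
  apply: leq_trans (msizeD_le _ _) _; rewrite msizeN; lia.
rewrite !(dcompwE h1 h2) !(dcompwE h1 h3) !(dcompwE h1 h4) -sumrB.
apply: eq_bigr => J _; rewrite -sumrB; apply: eq_bigr => M _.
rewrite /dterm -sumrB; apply: eq_bigr => I _.
by rewrite mcoeffB derIB !mulrBr scalerBl.
Qed.


Lemma hcXZ k c (m : 'X_{1..n}) : hc k (c *: 'X_[m]) = if mdeg m == k then c *: 'X_[m] else 0.
Proof. by rewrite linearZ /= pihomogX; case: ifP => _; rewrite ?scaler0. Qed.

Lemma mdegB_le (I J : 'X_{1..n}) : (I <= J)%MM -> mdeg J = (mdeg (J - I) + mdeg I)%N.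
Proof. by move=> h; rewrite -mdegD submK. Qed.

Lemma dterm_top P Q a b (J M : 'X_{1..n}) : (mdeg J <= a)%N -> (mdeg M <= b)%N ->
  hc (a + b) (dterm P Q J M) =
  if (mdeg J == a) && (mdeg M == b) then (P@_J * Q@_M) *: 'X_[J + M] else 0.
Proof.
move=> hJ hM; rewrite /dterm raddf_sum /=.
rewrite (bigD1 (@bm0 n (mdeg J))) //=; last by apply/mnm_lepP => i; rewrite mnm0E.
rewrite big1 ?addr0; last first.
  move=> I /andP [hI hI0]; rewrite hcXZ.
  have hI0' : (0 < mdeg (I : 'X_{1..n}))%N.
    rewrite lt0n mdeg_eq0; apply: contra hI0 => /eqP e; apply/eqP/val_inj; by rewrite /= e.
  have h1 := mdegB_le hI.
  rewrite mdegD; case: eqP => // e; exfalso; lia.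
rewrite hcXZ subm0 mdegD mbin0 derI0 mulr1.
case: (eqVneq (mdeg J) a) => ea; case: (eqVneq (mdeg M) b) => eb /=.
- by rewrite ea eb eqxx.
- by case: eqP => // e; exfalso; lia.
- by case: eqP => // e; exfalso; lia.
- by case: eqP => // e; exfalso; lia.
Qed.

Lemma dcomp_top P Q a b : (msize P <= a.+1)%N -> (msize Q <= b.+1)%N ->
  hc (a + b) (dcomp der P Q) = hc a P * hc b Q.
Proof.
move=> hP hQ.
have e : hc a P * hc b Q = \sum_(J <- msupp P) \sum_(M <- msupp Q)
    if (mdeg J == a) && (mdeg M == b) then (P@_J * Q@_M) *: 'X_[J + M] else 0.
  rewrite !pihomogE big_mkcond mulr_suml; apply: eq_bigr => J _.
  rewrite [X in _ * X]big_mkcond mulr_sumr; apply: eq_bigr => M _.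
  case: (mdeg J == a); case: (mdeg M == b); rewrite /= ?mul0r ?mulr0 //.
  by rewrite -scalerAl -scalerAr scalerA mpolyXD.
rewrite e /dcomp raddf_sum /=; rewrite big_seq [RHS]big_seq; apply: eq_bigr => J hJ.
rewrite raddf_sum /= big_seq [RHS]big_seq; apply: eq_bigr => M hM.
apply: dterm_top.
- by have := msize_mdeg_lt hJ; lia.
- by have := msize_mdeg_lt hM; lia.
Qed.

End Ops.

Section Aux.
Variables (K : fieldType) (n : nat).
Notation hc := (@pihomog n K mdeg).
Implicit Types (P Q X : {mpoly K[n]}).

Lemma mcoeff_hc k P m : (hc k P)@_m = if mdeg m == k then P@_m else 0.
Proof.
rewrite pihomogE raddf_sum /= big_mkcond /=.
rewrite [in RHS](mpolyE P) raddf_sum /=.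
case: ifP => hm.
  apply: eq_bigr => m0 _; rewrite mcoeffZ mcoeffX.
  case: (eqVneq m0 m) => [->|ne]; first by rewrite hm.
  by case: ifP => _; rewrite ?(negbTE ne) ?mulr0.
rewrite big1 // => m0 _; case: ifP => h; rewrite ?mcoeff0 // mcoeffZ mcoeffX.
case: (eqVneq m0 m) => [e|]; last by rewrite mulr0.
by move: hm; rewrite -e h.
Qed.

Lemma Sym0 : Sym (0 : {mpoly K[n]}) = 0.
Proof. by rewrite SymE raddf0. Qed.

Lemma Sym_eq0 P : Sym P = 0 -> P = 0.
Proof.
move=> e; apply/eqP; apply: contraT => P0.
have hm := mlead_supp P0.
have := congr1 (mcoeff (mlead P)) e; rewrite SymE mcoeff_hc mcoeff0.
have -> : mdeg (mlead P) = dord P by rewrite /dord -mlead_deg.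
by rewrite eqxx => /eqP; rewrite mleadc_eq0 (negbTE P0).
Qed.

Lemma msize_homog k P : P != 0 -> P \is k.-homog -> msize P = k.+1.
Proof.
move=> P0 hk; have := dhomog_msize hk => h2.
rewrite (dhomog_uniq P0 hk h2); exact: mpolySpred.
Qed.

Lemma Sym_msize P S e : Sym P = S -> S != 0 -> S \is e.-homog -> msize P = e.+1 /\ hc e P = S.
Proof.
move=> hS S0 he.
have P0 : P != 0 by apply: contra S0 => /eqP e0; rewrite -hS e0 Sym0.
have hd : dord P = e.
  apply: (dhomog_uniq S0) he; rewrite -hS SymE; exact: pihomogP.
split; last by rewrite -hd.
by rewrite -hd /dord -mpolySpred.
Qed.

Lemma msize_hc_le k P : (msize (hc k P) <= msize P)%N.
Proof.
case: (eqVneq (hc k P) 0) => [->|X0]; first by rewrite msize0.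
rewrite -(mlead_deg X0).
have : mlead (hc k P) \in msupp P.
  have := mlead_supp X0; rewrite !mcoeff_msupp mcoeff_hc.
  by case: ifP => //; rewrite eqxx.
by move/msize_mdeg_lt.
Qed.

Lemma ord_lt_msize X (d d0 d1 : nat) :
  ord_lt X ((d%:Z - d0%:Z) - (d%:Z - d1%:Z)) -> (msize X <= d1 - d0)%N.
Proof.
rewrite /ord_lt; case: (eqVneq X 0) => [->|X0] /=; first by rewrite msize0.
rewrite /dord (mpolySpred _ X0) /=.
move: (msize X).-1 => k h; lia.
Qed.

End Aux.

Section Key.
Variables (K : fieldType) (n : nat).

Lemma key (S0 S1 S2 X Y : {mpoly K[n]}) (d0 d1 : nat) :
  is_gcd S0 S1 S2 -> S1 != 0 -> S1 \is d1.-homog -> S0 \is d0.-homog ->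
  X * S2 + S1 * Y = 0 -> (msize X <= d1 - d0)%N -> X = 0.
Proof.
move=> [[A eA] [B eB] hmax] S10 h1 h0 eq hX.
have S00 : S0 != 0 by apply: contra S10 => /eqP e; rewrite eA e mulr0.
have A0 : A != 0 by apply: contra S10 => /eqP e; rewrite eA e mul0r.
have XB : X * B = (- Y) * A.
  apply/eqP; rewrite mulNr -addr_eq0; apply/eqP.
  apply: (mulIf S00); rewrite mul0r mulrDl.
  by rewrite -[RHS]eq eB eA; ring.
have cop : forall H, dv H A -> dv H B -> unt H.
  move=> H [a ea] [b eb].
  have [w ew] : mdvd (H * S0) S0.
    apply: hmax; [exists a; rewrite eA ea; ring | exists b; rewrite eB eb; ring].
  exists w; apply: (mulIf S00); by rewrite mul1r -mulrA -ew.
have [W eW] := ufd_gauss (@mpoly_ufd K n) A0 cop (ex_intro _ (- Y) XB).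
apply/eqP; apply: contraT => X0.
have W0 : W != 0 by apply: contra X0 => /eqP e; rewrite eW e mul0r.
have mS1 := msize_homog S10 h1.
have mS0 := msize_homog S00 h0.
have mA : msize S1 = (msize A + msize S0).-1 by rewrite eA msizeM.
have mX : msize X = (msize W + msize A).-1 by rewrite eW msizeM.
have pW : (0 < msize W)%N by rewrite lt0n msize_poly_eq0.
have pA : (0 < msize A)%N by rewrite lt0n msize_poly_eq0.
move: hX mA mX pW pA; rewrite mS1 mS0 -!subn1; move: (msize X) (msize W) (msize A) => x w a ? ? ? ? ?; exfalso; lia.
Qed.

End Key.

Lemma arith1 e1 d2 d1 e2 : (e1.+1 <= (maxn (e1 + d2) (d1 + e2) - d2).+1)%N.
Proof. lia. Qed.
Lemma arith2 e1 d2 d1 e2 : (e2.+1 <= (maxn (e1 + d2) (d1 + e2) - d1).+1)%N.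
Proof. lia. Qed.
Lemma arith3 e1 d2 d1 e2 : (d1 + e2 <= e1 + d2)%N -> (maxn (e1 + d2) (d1 + e2) - d2 = e1)%N.
Proof. lia. Qed.
Lemma arith4 e1 d2 d1 e2 : (e1 + d2 < d1 + e2)%N -> (maxn (e1 + d2) (d1 + e2) - d1 = e2)%N.
Proof. lia. Qed.
Lemma arith5 e1 d2 d1 e2 : (maxn (e1 + d2) (d1 + e2) = maxn (e1 + d2) (d1 + e2) - d2 + d2)%N.
Proof. lia. Qed.
Lemma arith6 e1 d2 d1 e2 : (maxn (e1 + d2) (d1 + e2) = d1 + (maxn (e1 + d2) (d1 + e2) - d1))%N.
Proof. lia. Qed.

Unset Implicit Arguments.
Set Strict Implicit.

Theorem mainTheorem1 (K : fieldType) (n : nat) (der : 'I_n -> K -> K)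
  (L S1 S2 S0 : {mpoly K[n]}) (d d1 d2 d0 : nat) :
  is_comm_derivations der ->
  L != 0 -> dord L = d ->
  Sym L = S1 * S2 ->
  S1 \is d1.-homog -> S2 \is d2.-homog ->
  is_gcd S0 S1 S2 -> S0 \is d0.-homog ->
  forall F1 F2 : {mpoly K[n]},
    Sym F1 = S1 -> Sym F2 = S2 ->
    ord_lt (L - dcomp der F1 F2) (d%:Z - d0%:Z) ->
  forall G1 G2 G1' G2' : {mpoly K[n]},
    L = dcomp der G1 G2 -> Sym G1 = S1 -> Sym G2 = S2 ->
    ord_lt (F1 - G1) ((d%:Z - d0%:Z) - (d%:Z - d1%:Z)) ->
    ord_lt (F2 - G2) ((d%:Z - d0%:Z) - (d%:Z - d2%:Z)) ->
    L = dcomp der G1' G2' -> Sym G1' = S1 -> Sym G2' = S2 ->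
    ord_lt (F1 - G1') ((d%:Z - d0%:Z) - (d%:Z - d1%:Z)) ->
    ord_lt (F2 - G2') ((d%:Z - d0%:Z) - (d%:Z - d2%:Z)) ->
    G1 = G1' /\ G2 = G2'.
Proof.
move=> hder L0 hdL hSL hS1 hS2 hg hS0 F1 F2 hF1 hF2 hFL G1 G2 G1' G2'
  eL hG1 hG2 o1 o2 eL' hG1' hG2' o1' o2'.
have S1S2 : S1 * S2 != 0 by rewrite -hSL; apply: contra L0 => /eqP /Sym_eq0 ->.
have S10 : S1 != 0 by apply: contra S1S2 => /eqP ->; rewrite mul0r.
have S20 : S2 != 0 by apply: contra S1S2 => /eqP ->; rewrite mulr0.
have [mG2 tG2] := Sym_msize hG2 S20 hS2.
have [mG1' tG1'] := Sym_msize hG1' S10 hS1.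
have hP1 : (msize (G1 - G1') <= d1 - d0)%N.
  have -> : G1 - G1' = (F1 - G1') - (F1 - G1) by ring.
  apply: leq_trans (msizeD_le _ _) _; rewrite msizeN geq_max.
  by apply/andP; split; apply: (ord_lt_msize (d := d)).
have hP2 : (msize (G2 - G2') <= d2 - d0)%N.
  have -> : G2 - G2' = (F2 - G2') - (F2 - G2) by ring.
  apply: leq_trans (msizeD_le _ _) _; rewrite msizeN geq_max.
  by apply/andP; split; apply: (ord_lt_msize (d := d)).
have Z : dcomp der (G1 - G1') G2 + dcomp der G1' (G2 - G2') = 0.
  rewrite (dcompBl hder) (dcompBr hder) -eL -eL'; ring.
move: hP1 hP2 Z; set P1 := G1 - G1'; set P2 := G2 - G2' => hP1 hP2 Z.
suff [e1 e2] : P1 = 0 /\ P2 = 0.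
  by split; apply/eqP; rewrite -subr_eq0; apply/eqP.
have dc0r : forall P, dcomp der P 0 = 0.
  by move=> P; have := dcompBr hder P 0 0; rewrite subrr => ->; rewrite subrr.
have dc0l : forall Q, dcomp der 0 Q = 0.
  by move=> Q; have := dcompBl hder 0 0 Q; rewrite subrr => ->; rewrite subrr.
case: (eqVneq P1 0) => P10; case: (eqVneq P2 0) => P20 //.
-
  exfalso; move: Z; rewrite P10 dc0l add0r => Z.
  have := dcomp_top der (a := d1) (b := dord P2) (Q := P2) (eq_leq mG1').
  rewrite Z raddf0 tG1' /dord -(mpolySpred _ P20) => /(_ (leqnn _)) /esym /eqP.
  rewrite mulf_eq0 (negbTE S10) /= -SymE => /eqP /Sym_eq0; exact/eqP.
-
  exfalso; move: Z; rewrite P20 dc0r addr0 => Z.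
  have := dcomp_top der (a := dord P1) (b := d2) (P := P1) ^~ (eq_leq mG2).
  rewrite Z raddf0 tG2 /dord -(mpolySpred _ P10) => /(_ (leqnn _)) /esym /eqP.
  rewrite mulf_eq0 (negbTE S20) orbF -SymE => /eqP /Sym_eq0; exact/eqP.
exfalso.
have mP1 : msize P1 = (dord P1).+1 by rewrite /dord -mpolySpred.
have mP2 : msize P2 = (dord P2).+1 by rewrite /dord -mpolySpred.
pose T := maxn (dord P1 + d2) (d1 + dord P2).
have T1 : T = (T - d2 + d2)%N by apply: arith5.
have T2 : T = (d1 + (T - d1))%N by apply: arith6.
have h1 : pihomog mdeg T (dcomp der P1 G2) = pihomog mdeg (T - d2) P1 * S2.
  rewrite {1}T1 (dcomp_top der (P := P1) (Q := G2) (a := T - d2) (b := d2)) ?tG2 ?(eq_leq mG2) //.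
  by rewrite mP1; apply: arith1.
have h2 : pihomog mdeg T (dcomp der G1' P2) = S1 * pihomog mdeg (T - d1) P2.
  rewrite {1}T2 (dcomp_top der (P := G1') (Q := P2) (a := d1) (b := T - d1)) ?tG1' ?(eq_leq mG1') //.
  by rewrite mP2; apply: arith2.
have ZT : pihomog mdeg (T - d2) P1 * S2 + S1 * pihomog mdeg (T - d1) P2 = 0.
  by rewrite -h1 -h2 -raddfD /= Z raddf0.
have X0 := key hg S10 hS1 hS0 ZT (leq_trans (msize_hc_le _ _) hP1).
move: ZT; rewrite X0 mul0r add0r => /eqP; rewrite mulf_eq0 (negbTE S10) /= => /eqP Y0.
case: (leqP (d1 + dord P2) (dord P1 + d2)) => hle.
  have : (T - d2)%N = dord P1 by apply: arith3.
  move=> e; move: X0; rewrite e -SymE => /Sym_eq0; exact/eqP.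
have : (T - d1)%N = dord P2 by apply: arith4.
move=> e; move: Y0; rewrite e -SymE => /Sym_eq0; exact/eqP.
Qed.
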